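(* Let $\mathbf{X}$ be an $\mathbf{I}$-separated structure with universe $X$ and let $\{L,U\}$ be a partition of $X$. Then the characteristic function of $U$ is a homomorphism from $\mathbf{X}$ into $\mathbf{I}$ if and only if for every finite $s\subseteq U$ and every finite $t\subseteq L$ we have $s\not\sqsubseteq t$.
   Context: $\mathbf{I}$ is the structure with universe $\{0,1\}$ and, for all $n,m\in\mathbb N$ (including $0$), an $(n+m)$-ary relation $I_{n,m}$ given by $I_{n,m}(a_0,\dots,a_{n-1},b_0,\dots,b_{m-1})\iff \min_{i<n}a_i\le\max_{j<m}b_j$, with $\min\emptyset=1$, $\max\emptyset=0$. A structure is $\mathbf{I}$-separated if it embeds into some power of $\mathbf{I}$. For a structure in the language $\{I_{n,m}\}$ and finite subsets $a=\{s_0,\dots,s_{n-1}\}$, $b=\{t_0,\dots,t_{m-1}\}$ of its universe, $a\sqsubseteq b$ means $I_{n,m}(s_0,\dots,s_{n-1},t_0,\dots,t_{m-1})$. A homomorphism into $\mathbf{I}$ is a map preserving all $I_{n,m}$. *)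

(* Defs.v *)
From mathcomp Require Import all_boot.
Set Implicit Arguments. Unset Strict Implicit. Unset Printing Implicit Defensive.

(* A structure in the language {I_{n,m} : n,m in nat}: a carrier X together with,
   for all n m, an (n+m)-ary relation, whose arguments are given as a pair of
   tuples a : 'I_n -> X (first n arguments) and b : 'I_m -> X (last m). *)
Definition lang_rel (X : Type) :=
  forall n m : nat, ('I_n -> X) -> ('I_m -> X) -> Prop.

(* The two-element structure I, universe {0,1} encoded as bool (false = 0,
   true = 1).  min over the empty family is 1 (= true), max over the empty
   family is 0 (= false). *)
Definition Imin n (a : 'I_n -> bool) : bool := \big[andb/true]_(i < n) a i.
Definition Imax m (b : 'I_m -> bool) : bool := \big[orb/false]_(j < m) b j.
Definition Irel : lang_rel bool := fun n m a b => (Imin a <= Imax b)%N.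

Definition Ipow_rel (K : Type) : lang_rel (K -> bool) :=
  fun n m a b => forall k : K, Irel (fun i => a i k) (fun j => b j k).

Definition embedding (X Y : Type) (RX : lang_rel X) (RY : lang_rel Y) (f : X -> Y) :=
  injective f /\
  forall n m (a : 'I_n -> X) (b : 'I_m -> X),
    RX n m a b <-> RY n m (fun i => f (a i)) (fun j => f (b j)).

Definition I_separated (X : Type) (R : lang_rel X) :=
  exists (K : Type) (f : X -> (K -> bool)), embedding R (@Ipow_rel K) f.

Definition hom_into_I (X : Type) (R : lang_rel X) (h : X -> bool) :=
  forall n m (a : 'I_n -> X) (b : 'I_m -> X),
    R n m a b -> Irel (fun i => h (a i)) (fun j => h (b j)).

(* a ⊑ b for finite subsets s = {a_0,...,a_{n-1}}, t = {b_0,...,b_{m-1}},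
   given by injective enumerations. *)
Definition sqsub (X : Type) (R : lang_rel X) n m (a : 'I_n -> X) (b : 'I_m -> X) :=
  R n m a b.

(* Main.v *)
Require Import Defs.
From mathcomp Require Import all_boot.
From Stdlib Require Import Classical.

Lemma IminP n (a : 'I_n -> bool) : Imin a <-> forall i, a i.
Proof.
rewrite /Imin big_all; split.
  by move/allP=> H i; apply: H; rewrite mem_index_enum.
by move=> H; apply/allP=> i _; apply: H.
Qed.

Lemma ImaxP m (b : 'I_m -> bool) : Imax b <-> exists j, b j.
Proof.
rewrite /Imax big_has; split.
  by move/hasP=> [j _ Hj]; exists j.
by move=> [j Hj]; apply/hasP; exists j; rewrite ?mem_index_enum.
Qed.

Lemma dedup (X : Type) n (a : 'I_n -> X) :
  exists n' (c : 'I_n' -> X), injective c /\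
    forall x, (exists i, a i = x) <-> (exists i, c i = x).
Proof.
elim: n a => [|n IH] a.
  exists 0, a; split; first by case.
  by move=> x; split.
have [n' [c [Ic Hc]]] := IH (fun i => a (lift ord0 i)).
case: (classic (exists i, c i = a ord0)) => [[i0 Hi0]|Hno].
  exists n', c; split=> // x; split.
    move=> [i <-]; case: (unliftP ord0 i) => [j ->|->].
      by apply/Hc; exists j.
    by exists i0.
  move=> /Hc [j <-]; by exists (lift ord0 j).
exists n'.+1, (fun i => match unlift ord0 i with Some j => c j | None => a ord0 end).
split.
  move=> i1 i2.
  case: (unliftP ord0 i1) => [j1 ->|->]; case: (unliftP ord0 i2) => [j2 ->|->] //=;
    rewrite ?liftK ?unlift_none.
  - by move/Ic ->.
  - by move=> E; exfalso; apply: Hno; exists j1.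
  - by move=> E; exfalso; apply: Hno; exists j2.
move=> x; split.
  move=> [i <-]; case: (unliftP (@ord0 n) i) => [j ->|->]; rewrite ?liftK ?unlift_none.
    have [k Hk] : exists k, c k = a (lift ord0 j) by apply/Hc; exists j.
    by exists (lift ord0 k); rewrite liftK.
  by exists ord0; rewrite unlift_none.
move=> [i <-]; case: (unliftP (@ord0 n') i) => [j _|_].
  have [k Hk] : exists k, a (lift ord0 k) = c j by apply/Hc; exists j.
  by exists (lift ord0 k).
by exists ord0.
Qed.

Theorem mainTheorem6 (X : Type) (R : lang_rel X) (L U : pred X) :
  I_separated R ->
  (forall x, U x || L x) -> (forall x, ~~ (U x && L x)) ->
  hom_into_I R (fun x => U x) <->
  (forall n m (s : 'I_n -> X) (t : 'I_m -> X),
     injective s -> injective t ->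
     (forall i, U (s i)) -> (forall j, L (t j)) ->
     ~ sqsub R s t).
Proof.
move=> [K [f [_ Hf]]] HUL HnUL; split.
  move=> H n m s t _ _ Us Lt Rst.
  have := H _ _ _ _ Rst; rewrite /Irel.
  have -> : Imin (fun i => U (s i)) = true by apply/IminP.
  case E: (Imax _) => //; move/ImaxP: E => [j Hj].
  by move: (HnUL (t j)); rewrite Hj Lt.
move=> H n m a b Rab; rewrite /Irel.
case Ea: (Imin _) => //; case Eb: (Imax _) => //; exfalso.
move/IminP: Ea => Ua.
have Lb : forall j, L (b j).
  move=> j; move: (HUL (b j)); case Ubj: (U (b j)) => //= _.
  by move: Eb; have -> // : Imax (fun j => U (b j)) = true; apply/ImaxP; exists j.
have [n' [s [Is Hs]]] := @dedup X n a.
have [m' [t [It Ht]]] := @dedup X m b.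
apply: (H n' m' s t Is It).
- by move=> i; have [k <-] : exists k, a k = s i by apply/Hs; exists i.
- by move=> j; have [k <-] : exists k, b k = t j by apply/Ht; exists j.
rewrite /sqsub Hf => k; move/Hf: Rab => /(_ k); rewrite /Irel.
case E1: (Imin (fun i => f (s i) k)) => //= Hab.
move/IminP: E1 => E1.
have : Imin (fun i => f (a i) k).
  apply/IminP => i; have [j <-] : exists j, s j = a i by apply/Hs; exists i.
  exact: E1.
move=> Ea; rewrite Ea in Hab.
have : Imax (fun j => f (b j) k) by case: (Imax _) Hab.
move/ImaxP => [j Hj].
have [j' Ej'] : exists j', t j' = b j by apply/Ht; exists j.
suff -> : Imax (fun j => f (t j) k) by [].
by apply/ImaxP; exists j'; rewrite Ej'.
Qed.
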